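(* Let $q$ be a prime power, $1\le \ell\le m$, $V=\mathbb F_q^m$, and let $C(\ell,m)$, $\tau$, $n$ and $g(\cdot)$ be as defined below. Let $D$ be a subspace of $C(\ell,m)$ with $s=\dim D$, and let $\mathcal D=\tau^{-1}(D)\subseteq\bigwedge^{m-\ell}V$. Then $\mathcal E:=\{\omega'\in\bigwedge^{\ell}V:\omega'\wedge\omega=0\text{ for all }\omega\in\mathcal D\}$ is a subspace of $\bigwedge^{\ell}V$ of codimension $s$, and $\|D\|=n-g(\mathcal E)$.
   Context: Fix a basis $e_1,\dots,e_m$ of $V$ and identify $\bigwedge^mV$ with $\mathbb F_q$ via $e_1\wedge\cdots\wedge e_m=1$. Let $n=\left[{m\atop \ell}\right]_q$ be the number of $\ell$-dimensional subspaces of $V$, and fix representatives $\omega'_1,\dots,\omega'_n\in\bigwedge^{\ell}V$, where $\omega'_i=v_1\wedge\cdots\wedge v_\ell$ for a basis $v_1,\dots,v_\ell$ of the $i$-th $\ell$-dimensional subspace; let $T(\ell,m)=\{\omega'_1,\dots,\omega'_n\}$. $\tau:\bigwedge^{m-\ell}V\to\mathbb F_q^n$, $\tau(\omega)=(\omega'_1\wedge\omega,\dots,\omega'_n\wedge\omega)$, is injective, and $C(\ell,m)=\tau(\bigwedge^{m-\ell}V)$. For a subspace $\mathcal E$ of $\bigwedge^{\ell}V$, $g(\mathcal E)=|\mathcal E\cap T(\ell,m)|$. For $D\subseteq\mathbb F_q^n$, $\|D\|$ is the number of coordinates $i$ such that $x_i\ne0$ for some $x\in D$. *)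

(* Defs.v *)
From HB Require Import structures.
From mathcomp Require Import all_boot all_order all_algebra.
Set Implicit Arguments. Unset Strict Implicit. Unset Printing Implicit Defensive.
Import Order.TTheory GRing.Theory.
Local Open Scope ring_scope.

Section Wedge.
Variables (F : finFieldType) (m : nat).

(* k-subsets of {0,...,m-1}: index set of the standard basis e_S of /\^k V *)
Definition ksub (k : nat) := {S : {set 'I_m} | #|S| == k}.

(* /\^k V, in coordinates w.r.t. the basis e_S = e_{s_1} /\ ... /\ e_{s_k},
   s_1 < ... < s_k *)
Definition wedge (k : nat) := {ffun ksub k -> F^o}.

(* sign of e_S /\ e_T relative to e_1 /\ ... /\ e_m : (-1)^(#inversions) *)
Definition wsign (S T : {set 'I_m}) : F :=
  (-1) ^+ #|[set p : 'I_m * 'I_m | [&& p.1 \in S, p.2 \in T & (p.2 < p.1)%N]]|.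

(* the pairing /\^a V x /\^b V -> /\^m V = F, with e_1 /\ ... /\ e_m = 1 *)
Definition wedge_top (a b : nat) (x : wedge a) (y : wedge b) : F :=
  \sum_(S : ksub a) \sum_(T : ksub b)
     (if [disjoint val S & val T] then wsign (val S) (val T) * x S * y T else 0).

(* v_1 /\ ... /\ v_k where v_i is the i-th row of A: coordinate on e_S is the
   k x k minor of A on the columns of S (taken in increasing order) *)
Definition dec (k : nat) (A : 'M[F]_(k, m)) : wedge k :=
  [ffun S : ksub k => \det (\matrix_(i < k, j < k)
      (if onth (enum (val S)) j is Some x then A i x else 0))].

(* the l-dimensional subspaces of V = 'rV_m, via canonical row-space matrices *)
Definition subsp (l : nat) := {A : 'M[F]_m | (<<A>>%MS == A) && (\rank A == l)}.

(* tau : /\^(m-l) V -> F^n, given the chosen bases rep W of the subspaces W *)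
Definition tau (l : nat) (rep : subsp l -> 'M[F]_(l, m)) (w : wedge (m - l))
  : {ffun subsp l -> F^o} :=
  [ffun W => wedge_top (dec (rep W)) w].

Definition supp_size (I : finType) (D : {vspace {ffun I -> F^o}}) : nat :=
  #|[set i : I | [exists x : {ffun I -> F^o}, (x \in D) && (x i != 0)]]|.

End Wedge.

(* Main.v *)
Require Import Defs.
From HB Require Import structures.
From mathcomp Require Import all_boot all_order all_algebra.
From mathcomp Require Import ring zify.
Set Implicit Arguments. Unset Strict Implicit. Unset Printing Implicit Defensive.
Import GRing.Theory.
Local Open Scope ring_scope.

Section Aux.
Variables (F : finFieldType) (m : nat).

Definition cS (a b : nat) (S : ksub m a) (y : wedge F m b) : F :=
  \sum_(T : ksub m b) (if [disjoint val S & val T] then wsign F (val S) (val T) * y T else 0).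

Lemma wedge_topE a b (x : wedge F m a) (y : wedge F m b) :
  wedge_top x y = \sum_S x S * cS S y.
Proof.
rewrite /wedge_top; apply: eq_bigr => S _; rewrite mulr_sumr; apply: eq_bigr => T _.
by case: ifP => _; [rewrite mulrCA mulrA | rewrite mulr0].
Qed.

Lemma cS_lin a b (S : ksub m a) (c : F) (y z : wedge F m b) :
  cS S (c *: y + z) = c * cS S y + cS S z.
Proof.
rewrite /cS mulr_sumr -big_split; apply: eq_bigr => T _ /=.
case: ifP => _; last by rewrite mulr0 addr0.
rewrite !ffunE /=.
rewrite /GRing.scale /=; ring.
Qed.

Lemma cS_sum a b (S : ksub m a) d (k : 'I_d -> F) (y : 'I_d -> wedge F m b) :
  cS S (\sum_i k i *: y i) = \sum_i k i * cS S (y i).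
Proof.
elim/big_rec2: _ => [|i u v _ IH]; last by rewrite cS_lin IH.
by rewrite /cS big1 // => T _; rewrite ffunE; case: ifP => _; rewrite ?mulr0.
Qed.

Lemma wedge_top_lin a b (c : F) (x x' : wedge F m a) (y : wedge F m b) :
  wedge_top (c *: x + x') y = c * wedge_top x y + wedge_top x' y.
Proof.
rewrite !wedge_topE mulr_sumr -big_split; apply: eq_bigr => S _ /=.
rewrite !ffunE /GRing.scale /=; ring.
Qed.

Lemma wedge_top_linr a b (c : F) (x : wedge F m a) (y y' : wedge F m b) :
  wedge_top x (c *: y + y') = c * wedge_top x y + wedge_top x y'.
Proof.
rewrite !wedge_topE mulr_sumr -big_split; apply: eq_bigr => S _ /=.
rewrite cS_lin; ring.
Qed.

Definition eS a (S : ksub m a) : wedge F m a := [ffun T => (T == S)%:R].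

Lemma wedge_top_eS a b (S : ksub m a) (y : wedge F m b) : wedge_top (eS S) y = cS S y.
Proof.
rewrite wedge_topE (bigD1 S) //= ffunE eqxx mul1r big1 ?addr0 // => T /negbTE.
by rewrite ffunE => ->; rewrite mul0r.
Qed.

Lemma wsign_neq0 (S T : {set 'I_m}) : wsign F S T != 0.
Proof. by rewrite /wsign expf_neq0 // oppr_eq0 oner_eq0. Qed.

Lemma nondeg l (hlm : (l <= m)%N) (y : wedge F m (m - l)) :
  (forall S : ksub m l, cS S y = 0) -> y = 0.
Proof.
move=> H; apply/ffunP => T0; rewrite ffunE.
have cT : #|~: val T0| == l.
  have := cardsC (val T0); rewrite card_ord => e.
  have t := eqP (valP T0); apply/eqP; lia.
have := H (exist (fun S : {set 'I_m} => #|S| == l) _ cT); rewrite /cS (bigD1 T0) //= big1 ?addr0.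
  rewrite disjoints_subset subxx => /eqP; rewrite mulf_eq0 (negbTE (wsign_neq0 _ _)).
  by move/eqP.
move=> T neT; case: ifP => // hd; case/eqP: neT; apply: val_inj; apply/eqP.
rewrite eqEcard (eqP (valP T)) (eqP (valP T0)) leqnn andbT.
by rewrite disjoint_sym disjoints_subset setCK in hd.
Qed.


Definition colsel a (S : ksub m a) : 'M[F]_(m, a) :=
  \matrix_(x, j) (if onth (enum (val S)) j is Some y then (x == y)%:R else 0).

Lemma minor_mul a (A : 'M[F]_(a, m)) (S : ksub m a) :
  \matrix_(i < a, j < a) (if onth (enum (val S)) j is Some x then A i x else 0)
  = A *m colsel S.
Proof.
apply/matrixP => i j; rewrite !mxE; case E: onth => [x|].
  rewrite (bigD1 x) //= mxE E eqxx mulr1 big1 ?addr0 // => k /negbTE nk.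
  by rewrite mxE E nk mulr0.
by rewrite big1 // => k _; rewrite mxE E mulr0.
Qed.

Lemma decE a (A : 'M[F]_(a, m)) S : dec A S = \det (A *m colsel S).
Proof. by rewrite ffunE minor_mul. Qed.

Lemma dec_mul a (P : 'M[F]_a) (A : 'M[F]_(a, m)) : dec (P *m A) = \det P *: dec A.
Proof.
apply/ffunP => S; rewrite [in RHS]ffunE !decE -mulmxA det_mulmx.
by [].
Qed.

Lemma rowfree_of_dec a (A : 'M[F]_(a, m)) S : dec A S != 0 -> row_free A.
Proof.
rewrite decE => h.
have u : A *m colsel S \in unitmx by rewrite unitmxE unitfE.
by rewrite /row_free eqn_leq rank_leq_row /= -{1}(mxrank_unit u) mxrankM_maxl.
Qed.

Lemma size_ksub a (S : ksub m a) : size (enum (val S)) = a.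
Proof. by rewrite -cardE (eqP (valP S)). Qed.

Lemma onth_ksub a (S : ksub m a) (j : 'I_a) :
  {x | onth (enum (val S)) j = Some x & x \in val S}.
Proof.
case E: onth => [x|].
  exists x => //; rewrite -mem_enum -(onth_nth x x _ _ E); apply: mem_nth.
  by rewrite -cardE (eqP (valP S)).
have := onthTE (enum (val S)) j; rewrite E -cardE (eqP (valP S)) ltn_ord.
by [].
Qed.

Lemma decAS a (S : ksub m a) : dec (colsel S)^T = eS S.
Proof.
apply/ffunP => T; rewrite decE ffunE.
have Eij : forall (U V : ksub m a) i j, ((colsel U)^T *m colsel V) i j =
   if onth (enum (val U)) i is Some y then (if onth (enum (val V)) j is Some z
       then (y == z)%:R else 0) else 0.
  move=> U V i j; rewrite !mxE.
  case: (onth_ksub U i) => y Ey _; case: (onth_ksub V j) => z Ez _; rewrite Ey Ez.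
  rewrite (bigD1 y) //= !mxE Ey Ez eqxx mul1r big1 ?addr0 // => k /negbTE nk.
  by rewrite !mxE Ey nk mul0r.
case: eqP => [->|neTS].
  suff -> : (colsel S)^T *m colsel S = 1%:M by rewrite det1.
  apply/matrixP => i j; rewrite Eij mxE.
  case: (onth_ksub S i) => y Ey _; case: (onth_ksub S j) => z Ez _; rewrite Ey Ez.
  rewrite -(onth_nth y y _ _ Ey) -(onth_nth y z _ _ Ez) nth_uniq ?enum_uniq //;
    by rewrite -cardE (eqP (valP S)).
have : ~~ (val T \subset val S).
  apply/negP => sub; apply: neTS; apply: val_inj; apply/eqP.
  by rewrite eqEcard sub (eqP (valP S)) (eqP (valP T)) leqnn.
case/subsetPn => x xT xS.
have jlt : (index x (enum (val T)) < a)%N.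
  have : (index x (enum (val T)) < size (enum (val T)))%N by rewrite index_mem mem_enum.
  by rewrite size_ksub.
rewrite (expand_det_col _ (Ordinal jlt)) big1 // => i _.
rewrite Eij; case: (onth_ksub S i) => y Ey yS; rewrite Ey.
have -> : onth (enum (val T)) (Ordinal jlt) = Some x.
  rewrite onthE (nth_map x) ?nth_index ?mem_enum //.
  by rewrite size_ksub.
case: eqP => [exy|]; last by rewrite mul0r.
by rewrite -exy yS in xS.
Qed.


Lemma wedge_topZ a b (c : F) (x : wedge F m a) (y : wedge F m b) :
  wedge_top (c *: x) y = c * wedge_top x y.
Proof.
rewrite !wedge_topE mulr_sumr; apply: eq_bigr => S _.
by rewrite ffunE /GRing.scale /= mulrA.
Qed.

Lemma wedge_top_sumr a b d (x : wedge F m a) (k : 'I_d -> F) (y : 'I_d -> wedge F m b) :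
  wedge_top x (\sum_i k i *: y i) = \sum_i k i * wedge_top x (y i).
Proof.
rewrite wedge_topE; under eq_bigr do rewrite cS_sum mulr_sumr.
rewrite exchange_big /=; apply: eq_bigr => i _; rewrite wedge_topE mulr_sumr.
by apply: eq_bigr => S _; rewrite mulrCA.
Qed.

End Aux.

Section Lin.
Variables (F : finFieldType) (m l : nat) (rep : subsp F m l -> 'M[F]_(l, m)).

Lemma tau_lin : linear (tau rep).
Proof. by move=> c y z; apply/ffunP => W; rewrite !ffunE wedge_top_linr. Qed.

HB.instance Definition _ := GRing.isSemilinear.Build F _ _ _ (tau rep)
  (GRing.semilinear_linear tau_lin).

Variables (d : nat) (b : 'I_d -> wedge F m (m - l)).
Definition hfun (x : wedge F m l) : 'rV[F]_d := \row_j wedge_top x (b j).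

Lemma hfun_lin : linear hfun.
Proof. by move=> c y z; apply/rowP => j; rewrite !mxE wedge_top_lin. Qed.

HB.instance Definition _ := GRing.isSemilinear.Build F _ _ _ hfun
  (GRing.semilinear_linear hfun_lin).
End Lin.

Lemma sum_enum_val (F : finFieldType) m l (f : ksub m l -> F) :
  \sum_(S : ksub m l) f S = \sum_(i < #|{: ksub m l}|) f (enum_val i).
Proof. by rewrite -(big_enum_val (A := {: ksub m l})). Qed.

Unset Implicit Arguments.
Set Strict Implicit.

Theorem lemma5p1 (F : finFieldType) (m l : nat) (hl1 : (1 <= l)%N) (hlm : (l <= m)%N)
  (rep : subsp F m l -> 'M[F]_(l, m))
  (hrep : forall W, row_free (rep W) && (rep W == val W)%MS)
  (D : {vspace {ffun subsp F m l -> F^o}})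
  (hD : forall x, x \in D -> exists w : wedge F m (m - l), tau rep w = x) :
  exists E : {vspace wedge F m l},
    (forall w' : wedge F m l,
        w' \in E <-> (forall w : wedge F m (m - l), tau rep w \in D ->
                       wedge_top w' w = 0)) /\
    (\dim {: wedge F m l} - \dim E = \dim D)%N /\
    supp_size D = (#|{: subsp F m l}| - #|[set W | dec (rep W) \in E]|)%N.
Proof.
pose Dp := (linfun (tau rep) @^-1: D)%VS.
have memDp w : (w \in Dp) = (tau rep w \in D) by rewrite -memv_preim lfunE.
pose d := \dim Dp.
pose b := fun j : 'I_d => (vbasis Dp)`_j.
have bDp j : b j \in Dp.
  by apply: vbasis_mem; apply: mem_nth; rewrite size_tuple.
pose E := lker (linfun (hfun b)).
have memE x : x \in E <-> forall w, tau rep w \in D -> wedge_top x w = 0.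
  rewrite memv_ker lfunE /=; split.
    move/eqP => h w; rewrite -memDp => /coord_vbasis ->.
    rewrite wedge_top_sumr big1 // => j _.
    have := congr1 (fun r : 'rV_d => r 0 j) h; rewrite !mxE => ->.
    by rewrite mulr0.
  by move=> h; apply/eqP/rowP => j; rewrite !mxE; apply: h; rewrite -memDp.
exists E; split; first exact: memE.
split; last first.
  rewrite /supp_size cardsCs.
  suff -> : ~: [set i | [exists x, (x \in D) && (x i != 0)]] = [set W | dec (rep W) \in E] by [].
  apply/setP => W; rewrite !inE.
  apply/idP/idP.
    move=> h; apply/memE => w wD; apply/eqP; apply: contraNT h => nz.
    by apply/existsP; exists (tau rep w); rewrite wD /= ffunE.
  move/memE => H; apply/existsP => -[x /andP[xD]].
  by case: (hD x xD) => w ew; rewrite -ew ffunE H ?ew // eqxx.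
have tauinj : forall w, tau rep w = 0 -> w = 0.
  move=> w h; apply: (nondeg hlm) => S.
  have rkA : \rank (colsel F S)^T = l.
    apply/eqP; apply: (@rowfree_of_dec F m l _ S).
    by rewrite decAS ffunE eqxx oner_eq0.
  have cs : (<<(<<(colsel F S)^T>>%MS)>>%MS == <<(colsel F S)^T>>%MS) &&
            (\rank <<(colsel F S)^T>>%MS == l).
    by rewrite genmx_id eqxx mxrank_gen rkA eqxx.
  pose W : subsp F m l := exist (fun A : 'M[F]_m => (<<A>>%MS == A) && (\rank A == l)) _ cs.
  case/andP: (hrep W) => rf /andP[sub _].
  rewrite /= genmxE in sub.
  case/submxP: sub => P eP.
  have hW := congr1 (fun f : {ffun subsp F m l -> F^o} => f W) h.
  rewrite /= !ffunE eP dec_mul decAS wedge_topZ wedge_top_eS in hW.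
  have Pu : P \in unitmx.
    rewrite -row_free_unit /row_free eqn_leq rank_leq_row /=.
    by rewrite -{1}(eqP rf) eP mxrankM_maxl.
  have dP : (\det P == 0) = false by apply/negbTE; rewrite -unitfE -unitmxE.
  by move: hW => /eqP; rewrite mulf_eq0 dP /= => /eqP.
have ker0 : lker (linfun (tau rep)) == 0%VS.
  apply/lker0P => x y; rewrite !lfunE /= => e.
  apply/eqP; rewrite -subr_eq0; apply/eqP; apply: tauinj.
  have -> : tau rep (x - y) = tau rep x - tau rep y by apply: linearB.
  by rewrite e subrr.
have limgD : (D <= limg (linfun (tau rep)))%VS.
  apply/subvP => x xD; case: (hD x xD) => w <-.
  by rewrite -[tau rep w](lfunE (tau rep)); apply: memv_img; apply: memvf.
have dimD : \dim D = d.
  rewrite -{1}(lpreimK limgD) limg_dim_eq //.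
  by rewrite (eqP ker0) capv0.
rewrite dimD.
have := limg_ker_dim (linfun (hfun b)) fullv; rewrite capfv -/E => <-.
rewrite addKn.
pose G : 'M[F]_(#|{: ksub m l}|, d) := \matrix_(i, j) cS (enum_val i) (b j).
have hG : forall r : 'rV[F]_#|{: ksub m l}|,
    hfun b [ffun S => r 0 (enum_rank S)] = r *m G.
  move=> r; apply/rowP => j; rewrite !mxE wedge_topE.
  rewrite sum_enum_val; apply: eq_bigr => i _.
  by rewrite ffunE enum_valK mxE.
have rfT : row_free G^T.
  apply: inj_row_free => a ha.
  have v0 : \sum_j a 0 j *: b j = 0.
    apply: (nondeg hlm) => S; rewrite cS_sum.
    move: (congr1 (fun r : 'rV_#|{: ksub m l}| => r 0 (enum_rank S)) ha).
    rewrite !mxE => h; apply: (etrans _ h).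
    by apply: eq_bigr => j _; rewrite !mxE enum_rankK.
  apply/rowP => j; rewrite mxE.
  move/freeP: (basis_free (vbasisP Dp)) => /(_ (fun j => a 0 j)) h.
  exact: h v0 j.
have rG : row_full G by rewrite /row_full -mxrank_tr.
case/row_fullP: rG => B hB.
have -> : limg (linfun (hfun b)) = fullv.
  apply/eqP; rewrite eqEsubv subvf /=; apply/subvP => y _.
  rewrite -[y]mulmx1 -hB mulmxA -hG.
  have -> : forall X, hfun b X = linfun (hfun b) X by move=> X; rewrite lfunE.
  by apply: memv_img; apply: memvf.
rewrite dimvf. by rewrite (@dim_matrix F 1 d) mul1r.
Qed.
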